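(* Let $D$ be a digraph rooted at $r$, let $v \in V(D) \setminus \{r\}$, and let $L \subseteq D$ be $v$-large. Then for every $I \in \mathcal{G}_L(v)$ there is an $(r,v)$-path-system $\mathcal{P}$ in $L$ such that $\mathcal{P} \setminus \{rv\} \in \mathfrak{P}_D(v) \cap \mathfrak{P}_L(v)$ and $I \subseteq E^+(\mathcal{P})$, where $\mathcal{P} \setminus \{rv\}$ denotes $\mathcal{P}$ with the trivial one-edge path $rv$ removed (if it belongs to $\mathcal{P}$).
   Context: Digraphs have no loops or parallel edges; $H - rv$ denotes $H$ with the edge $rv$ deleted if present. $\mathrm{in}_H(v)$ is the set of edges of $H$ with head $v$. An $(x,y)$-path is a directed path from $x$ to $y$; an $(x,y)$-path-system is a set of pairwise internally disjoint $(x,y)$-paths. $E^+(\mathcal{P})$ is the set of terminal edges of the paths in $\mathcal{P}$. For a digraph $H$ rooted at $r$, $\mathcal{G}_H(v)$ is the set of all $I \subseteq \mathrm{in}_H(v)$ for which there is an $(r,v)$-path-system $\mathcal{P}$ in $H$ with $E^+(\mathcal{P}) = I$. For distinct $x,y$ with $xy \notin E$, an $(x,y)$-separation is a set $S \subseteq V\setminus\{x,y\}$ meeting every $(x,y)$-path. A set of paths $\mathcal{P}$ and a vertex set $S$ are orthogonal if each path of $\mathcal{P}$ meets $S$ in exactly one vertex and $S \subseteq \bigcup_{P\in\mathcal{P}}V(P)$. An $(x,y)$-path-system is Erdős–Menger if some $(x,y)$-separation is orthogonal to it. $\mathfrak{P}_H(v)$ is the set of Erdős–Menger $(r,v)$-path-systems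 in $H - rv$. A spanning subdigraph $L \subseteq D$ is $v$-large if some $\mathcal{P} \in \mathfrak{P}_D(v)$ has all its paths in $L$, and $rv \in E(L)$ whenever $rv \in E(D)$. *)

(* Defs.v *)
(* Digraphs on an arbitrary (possibly infinite) vertex type V,
   given by an edge relation (no parallel edges); sets are predicates. *)
From Stdlib Require Import List.
Import ListNotations.
Set Implicit Arguments.

Section Digraphs.
Variable V : Type.
Definition digraph := V -> V -> Prop.

Definition loopless (H : digraph) : Prop := forall x, ~ H x x.

Definition subdigraph (L D : digraph) : Prop := forall a b, L a b -> D a b.

Definition del_edge (H : digraph) (r v : V) : digraph :=
  fun a b => H a b /\ ~ (a = r /\ b = v).

Definition in_edges (H : digraph) (v : V) (e : V * V) : Prop :=
  snd e = v /\ H (fst e) (snd e).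

Fixpoint walk (H : digraph) (p : list V) : Prop :=
  match p with
  | x :: ((y :: _) as q) => H x y /\ walk H q
  | _ => True
  end.

Definition is_path (H : digraph) (x y : V) (p : list V) : Prop :=
  NoDup p /\ walk H p /\ hd_error p = Some x /\ last p x = y.

Definition path_system (H : digraph) (x y : V) (P : list V -> Prop) : Prop :=
  (forall p, P p -> is_path H x y p) /\
  (forall p q, P p -> P q -> p <> q ->
     forall w, In w p -> In w q -> w = x \/ w = y).

Definition term_edge (p : list V) (e : V * V) : Prop :=
  exists pre, p = pre ++ [fst e; snd e].

Definition Eplus (P : list V -> Prop) (e : V * V) : Prop :=
  exists p, P p /\ term_edge p e.

Definition Gset (H : digraph) (r v : V) (I : V * V -> Prop) : Prop :=
  (forall e, I e -> in_edges H v e) /\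
  exists P, path_system H r v P /\ (forall e, I e <-> Eplus P e).

Definition separation (H : digraph) (x y : V) (S : V -> Prop) : Prop :=
  x <> y /\ ~ H x y /\
  (forall w, S w -> w <> x /\ w <> y) /\
  (forall p, is_path H x y p -> exists w, In w p /\ S w).

Definition orthogonal (P : list V -> Prop) (S : V -> Prop) : Prop :=
  (forall p, P p -> exists! w, In w p /\ S w) /\
  (forall w, S w -> exists p, P p /\ In w p).

Definition erdos_menger (H : digraph) (x y : V) (P : list V -> Prop) : Prop :=
  path_system H x y P /\ exists S, separation H x y S /\ orthogonal P S.

Definition frakP (H : digraph) (r v : V) (P : list V -> Prop) : Prop :=
  erdos_menger (del_edge H r v) r v P.

Definition v_large (D L : digraph) (r v : V) : Prop :=
  subdigraph L D /\
  (exists P, frakP D r v P /\ forall p, P p -> walk L p) /\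
  (D r v -> L r v).

Definition remove_rv (r v : V) (P : list V -> Prop) : list V -> Prop :=
  fun p => P p /\ p <> [r; v].

End Digraphs.

(* Main.v *)
Require Import Defs.
From Stdlib Require Import List Lia Classical ClassicalEpsilon Arith PeanoNat.
Import ListNotations.

Lemma walk_nth {V} (H : digraph V) (p : list V) d :
  walk H p <-> forall i, S i < length p -> H (nth i p d) (nth (S i) p d).
Proof.
  induction p as [|a p IH]; simpl.
  - split; [intros _ i Hi; lia| auto].
  - destruct p as [|b p].
    + split; [intros _ i Hi; simpl in Hi; lia | auto].
    + split.
      * intros [Hab Hw] i Hi. destruct i as [|i]; [exact Hab|].
        apply (proj1 IH Hw). simpl in *; lia.
      * intros Hn. split.
        -- apply (Hn 0). simpl; lia.
        -- apply IH. intros i Hi. apply (Hn (S i)). simpl in *; lia.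
Qed.

Lemma last_nth {V} (p : list V) d : last p d = nth (pred (length p)) p d.
Proof.
  induction p as [|a p IH]; simpl; auto.
  destruct p as [|b p]; simpl; auto.
Qed.

Lemma is_path_nth {V} (H : digraph V) x y p d :
  is_path H x y p <-> (p <> [] /\ NoDup p /\
    (forall i, S i < length p -> H (nth i p d) (nth (S i) p d)) /\
    nth 0 p d = x /\ nth (pred (length p)) p d = y).
Proof.
  unfold is_path. rewrite (walk_nth H p d).
  destruct p as [|a p].
  - split; [intros (_&_&Hh&_); discriminate | intros (Hn&_); congruence].
  - rewrite last_nth.
    assert (E : nth (pred (length (a :: p))) (a :: p) x = nth (pred (length (a :: p))) (a :: p) d)
      by (apply nth_indep; simpl; lia).
    rewrite E. simpl (hd_error _). simpl (nth 0 _ _).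
    split.
    + intros (Hnd & Hw & Hh & Hl). injection Hh as ->. repeat split; auto; congruence.
    + intros (_ & Hnd & Hw & Hh & Hl). subst. repeat split; auto.
Qed.

Lemma walk_mono {V} (H H' : digraph V) p :
  (forall a b, H a b -> H' a b) -> walk H p -> walk H' p.
Proof.
  intros Hs. induction p as [|a p IH]; simpl; auto.
  destruct p as [|b p]; auto. intros [Hab Hw]; split; auto.
Qed.

Lemma walk_app_r {V} (H : digraph V) l1 l2 : walk H (l1 ++ l2) -> walk H l2.
Proof.
  induction l1 as [|a l1 IH]; simpl; auto.
  intros Hw. apply IH. destruct (l1 ++ l2); auto. destruct Hw; auto.
Qed.

Lemma last_indep {V} (l : list V) d d' : l <> [] -> last l d = last l d'.
Proof. intros. rewrite !last_nth. apply nth_indep. destruct l; [congruence|simpl; lia]. Qed.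

Lemma last_app_cons {V} (p1 p2 : list V) x d d' : last (x :: p2) d = last (p1 ++ x :: p2) d'.
Proof.
  induction p1 as [|a p1 IH]; [apply last_indep; discriminate|].
  rewrite IH. simpl. destruct (p1 ++ x :: p2) eqn:E; [destruct p1; discriminate|].
  apply last_indep. discriminate.
Qed.

Lemma shorten {V} (H : digraph V) (y : V) : forall l x,
  walk H (x :: l) -> last (x :: l) y = y ->
  exists p, is_path H x y p /\ incl p (x :: l).
Proof.
  induction l as [|b l IH]; intros x Hw Hl.
  - simpl in Hl. subst y. exists [x]. split.
    + repeat split; simpl; auto. constructor; auto. constructor.
    + apply incl_refl.
  - destruct Hw as [Hxb Hw].
    assert (Hl' : last (b :: l) y = y) by (simpl in Hl |- *; exact Hl).
    destruct (IH b Hw Hl') as [p [(Hnd & Hpw & Hh & Hpl) Hinc]].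
    destruct (classic (In x p)) as [Hin | Hnin].
    + apply in_split in Hin. destruct Hin as [p1 [p2 Hp]]. subst p.
      exists (x :: p2). split.
      * refine (conj _ (conj _ (conj _ _))).
        -- apply NoDup_app_remove_l in Hnd. exact Hnd.
        -- apply walk_app_r in Hpw. exact Hpw.
        -- reflexivity.
        -- rewrite <- Hpl. apply last_app_cons.
      * intros z Hz. right. apply Hinc. apply in_or_app. right. exact Hz.
    + exists (x :: p). split.
      * destruct p as [|c p]; [discriminate|]. simpl in Hh. injection Hh as ->.
        refine (conj _ (conj _ (conj _ _))).
        -- constructor; auto.
        -- simpl. split; auto.
        -- reflexivity.
        -- rewrite <- Hpl. symmetry. apply (last_app_cons [x] p b).
      * intros z [Hz|Hz]; [left; auto| right; apply Hinc; auto].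
Qed.

Fixpoint maxidx (P : nat -> Prop) (n : nat) : nat :=
  match n with
  | 0 => 0
  | S m => if excluded_middle_informative (P m) then m else maxidx P m
  end.

Lemma maxidx_spec (P : nat -> Prop) n k : P k -> k < n ->
  P (maxidx P n) /\ k <= maxidx P n /\ maxidx P n < n /\
  (forall j, maxidx P n < j -> j < n -> ~ P j).
Proof.
  induction n as [|n IH]; intros Hk Hkn; [lia|]. simpl.
  destruct (excluded_middle_informative (P n)) as [Hp|Hp].
  - repeat split; auto; lia.
  - assert (k < n) by (destruct (Nat.eq_dec k n); [subst; contradiction | lia]).
    destruct (IH Hk H) as (A & B & C & E). repeat split; auto; try lia.
    intros j Hj Hjn. destruct (Nat.eq_dec j n); subst; auto. apply E; lia.
Qed.

Lemma maxidx_le (P : nat -> Prop) n : maxidx P n <= pred n.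
Proof.
  induction n as [|n IH]; simpl; auto.
  destruct (excluded_middle_informative (P n)); lia.
Qed.

Lemma maxidx_mono (P P' : nat -> Prop) n :
  (forall k, P k -> P' k) -> maxidx P n <= maxidx P' n.
Proof.
  intros Hs. induction n as [|n IH]; simpl; auto.
  destruct (excluded_middle_informative (P n)) as [Hp|Hp];
  destruct (excluded_middle_informative (P' n)) as [Hp'|Hp']; auto.
  - exfalso; auto.
  - pose proof (maxidx_le P n). lia.
Qed.

Fixpoint minidx (P : nat -> Prop) (n : nat) (dflt : nat) : nat :=
  match n with
  | 0 => dflt
  | S m => if excluded_middle_informative (P m) then minidx P m m else minidx P m dflt
  end.

Lemma minidx_spec (P : nat -> Prop) n : forall dflt,
  ((exists k, k < n /\ P k) -> P (minidx P n dflt) /\ minidx P n dflt < n /\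
     forall j, j < minidx P n dflt -> ~ P j) /\
  (~ (exists k, k < n /\ P k) -> minidx P n dflt = dflt).
Proof.
  induction n as [|n IH]; intros dflt; simpl.
  - split; [intros [k [Hk _]]; lia | auto].
  - destruct (excluded_middle_informative (P n)) as [Hp|Hp].
    + split; [|intros Hn; exfalso; apply Hn; exists n; split; auto].
      intros _. destruct (classic (exists k, k < n /\ P k)) as [He|He].
      * destruct (proj1 (IH n) He) as (A & B & C). repeat split; auto; lia.
      * rewrite (proj2 (IH n) He). repeat split; auto.
        intros j Hj Pj. apply He. exists j; auto.
    + split.
      * intros [k [Hk Pk]]. assert (k < n) by (destruct (Nat.eq_dec k n); [subst; contradiction | lia]).
        destruct (proj1 (IH dflt) (ex_intro _ k (conj H Pk))) as (A & B & C).
        repeat split; auto; lia.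
      * intros Hn. apply (proj2 (IH dflt)). intros [k [Hk Pk]]. apply Hn. exists k; split; auto.
Qed.

Lemma ev_const_ex (f : nat -> nat) : exists X,
  (forall n, f (S n) <= f n) -> exists N, forall n, N <= n -> f n = X.
Proof.
  destruct (classic (forall n, f (S n) <= f n)) as [Hm|Hm]; [|exists 0; intros; contradiction].
  assert (Hmon : forall n m, n <= m -> f m <= f n).
  { intros n m Hnm. induction Hnm; auto. specialize (Hm m). lia. }
  assert (G : forall b N, f N <= b -> exists X N', forall n, N' <= n -> f n = X).
  { induction b as [|b IH]; intros N HN.
    - exists 0, N. intros n Hn. specialize (Hmon _ _ Hn). lia.
    - destruct (classic (exists M, N <= M /\ f M <= b)) as [[M [HM1 HM2]]|Hno].
      + exact (IH M HM2).
      + exists (f N), N. intros n Hn. specialize (Hmon _ _ Hn).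
        destruct (Nat.eq_dec (f n) (f N)); auto. exfalso; apply Hno. exists n; split; auto; lia. }
  destruct (G (f 0) 0 (le_n _)) as [X [N HN]]. exists X. intros _. exists N; auto.
Qed.

Definition evlim (f : nat -> nat) : nat := proj1_sig (constructive_indefinite_description _ (ev_const_ex f)).

Lemma evlim_spec f : (forall n, f (S n) <= f n) -> exists N, forall n, N <= n -> f n = evlim f.
Proof. unfold evlim. destruct (constructive_indefinite_description _ _) as [X HX]. simpl. exact HX. Qed.

Definition glue {V} (a : list V) k (b : list V) j := firstn (S k) a ++ skipn (S j) b.

Lemma glue_len {V} (a b : list V) k j : k < length a -> j < length b ->
  length (glue a k b j) = S k + (length b - S j).
Proof. intros. unfold glue. rewrite length_app, firstn_length_le, length_skipn; lia. Qed.

Lemma glue_nth1 {V} (a b : list V) k j i d : k < length a -> i <= k ->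
  nth i (glue a k b j) d = nth i a d.
Proof.
  intros. unfold glue. rewrite app_nth1 by (rewrite firstn_length_le; lia).
  rewrite nth_firstn. destruct (Nat.ltb_spec i (S k)); auto; lia.
Qed.

Lemma glue_nth2 {V} (a b : list V) k j i d : k < length a -> k < i ->
  nth i (glue a k b j) d = nth (S j + (i - S k)) b d.
Proof.
  intros. unfold glue. rewrite app_nth2 by (rewrite firstn_length_le; lia).
  rewrite nth_skipn, firstn_length_le by lia. reflexivity.
Qed.

Lemma glue_walk {V} (H : digraph V) a b k j d : k < length a -> j < length b ->
  nth k a d = nth j b d -> walk H a -> walk H b -> walk H (glue a k b j).
Proof.
  intros Hk Hj E Ha Hb. rewrite (walk_nth _ _ d) in Ha. rewrite (walk_nth _ _ d) in Hb. rewrite (walk_nth _ _ d). rewrite glue_len by auto.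
  intros i Hi. destruct (Nat.lt_ge_cases i k).
  - rewrite !glue_nth1 by (auto; lia). apply Ha; lia.
  - destruct (Nat.eq_dec i k).
    + subst. rewrite glue_nth1, glue_nth2 by (auto; lia). rewrite E.
      replace (S j + (S k - S k)) with (S j) by lia. apply Hb. lia.
    + rewrite !glue_nth2 by (auto; lia).
      replace (S j + (S i - S k)) with (S (S j + (i - S k))) by lia. apply Hb. lia.
Qed.

Lemma In_nth_iff {V} (l : list V) x d : In x l <-> exists i, i < length l /\ nth i l d = x.
Proof. split; [intros; apply In_nth; auto | intros [i [Hi E]]; subst; apply nth_In; auto]. Qed.

Lemma glue_in {V} (a b : list V) k j w d : k < length a -> j < length b ->
  In w (glue a k b j) ->
  (exists i, i <= k /\ nth i a d = w) \/ (exists i, j < i /\ i < length b /\ nth i b d = w).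
Proof.
  intros Hk Hj Hin. apply (In_nth_iff _ _ d) in Hin. destruct Hin as [i [Hi Ei]].
  rewrite glue_len in Hi by auto.
  destruct (Nat.le_gt_cases i k).
  - left. exists i. rewrite glue_nth1 in Ei by auto. auto.
  - right. exists (S j + (i - S k)). rewrite glue_nth2 in Ei by auto. repeat split; auto; lia.
Qed.

Lemma glue_in_l {V} (a b : list V) k j i d : k < length a -> i <= k ->
  In (nth i a d) (glue a k b j).
Proof.
  intros Hk Hi. rewrite <- (glue_nth1 a b k j i d) by auto. apply nth_In.
  unfold glue. rewrite length_app, firstn_length_le; lia.
Qed.

Lemma glue_last {V} (a b : list V) k j d : k < length a -> j < length b ->
  nth k a d = nth j b d ->
  nth (pred (length (glue a k b j))) (glue a k b j) d = nth (pred (length b)) b d.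
Proof.
  intros Hk Hj E. rewrite glue_len by auto.
  destruct (Nat.eq_dec (S j) (length b)).
  - replace (pred (S k + (length b - S j))) with k by lia. rewrite glue_nth1 by auto.
    rewrite E. f_equal. lia.
  - rewrite glue_nth2 by (auto; lia). f_equal. lia.
Qed.

Lemma glue_nodup {V} (a b : list V) k j d : k < length a -> j < length b ->
  NoDup a -> NoDup b ->
  (forall i i', i <= k -> j < i' -> i' < length b -> nth i a d <> nth i' b d) ->
  NoDup (glue a k b j).
Proof.
  intros Hk Hj Na Nb Hd. apply (NoDup_nth _ d). rewrite glue_len by auto.
  pose proof (proj1 (NoDup_nth a d) Na) as Na'.
  pose proof (proj1 (NoDup_nth b d) Nb) as Nb'.
  intros i i' Hi Hi' E.
  destruct (Nat.le_gt_cases i k); destruct (Nat.le_gt_cases i' k).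
  - rewrite !glue_nth1 in E by auto. apply Na'; auto; lia.
  - rewrite glue_nth1 in E by auto. rewrite glue_nth2 in E by auto.
    exfalso. apply (Hd i (S j + (i' - S k))); auto; lia.
  - rewrite glue_nth2 in E by auto. rewrite glue_nth1 in E by auto.
    exfalso. apply (Hd i' (S j + (i - S k))); auto; lia.
  - rewrite !glue_nth2 in E by auto. apply Nb' in E; lia.
Qed.

Lemma glue_nth0 {V} (a b : list V) k j d : k < length a -> nth 0 (glue a k b j) d = nth 0 a d.
Proof. intros. apply glue_nth1; auto; lia. Qed.

Lemma shorten' {V} (H : digraph V) l x y d : walk H l -> l <> [] -> nth 0 l d = x ->
  nth (pred (length l)) l d = y -> exists p, is_path H x y p /\ incl p l.
Proof.
  intros Hw Hne H0 Hl. destruct l as [|a l]; [congruence|]. simpl in H0. subst a.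
  apply shorten; auto. rewrite last_nth. rewrite <- Hl. apply nth_indep. simpl; lia.
Qed.

Lemma term_edge_nth {V} (p : list V) e d :
  term_edge p e <-> (2 <= length p /\ nth (length p - 2) p d = fst e /\ nth (length p - 1) p d = snd e).
Proof.
  split.
  - intros [pre ->]. rewrite length_app. simpl.
    rewrite !app_nth2 by lia.
    replace (length pre + 2 - 2 - length pre) with 0 by lia.
    replace (length pre + 2 - 1 - length pre) with 1 by lia. simpl. repeat split; auto; lia.
  - intros (Hl & E1 & E2). exists (firstn (length p - 2) p).
    rewrite <- (firstn_skipn (length p - 2) p) at 1. f_equal.
    assert (Hs : length (skipn (length p - 2) p) = 2) by (rewrite length_skipn; lia).
    pose proof (nth_skipn (length p - 2) p 0 d) as N0.
    pose proof (nth_skipn (length p - 2) p 1 d) as N1.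
    destruct (skipn (length p - 2) p) as [|x [|y [|z l]]]; simpl in Hs; try lia.
    simpl in N0, N1. rewrite N0, N1, Nat.add_0_r. rewrite E1.
    replace (length p - 2 + 1) with (length p - 1) by lia. rewrite E2. reflexivity.
Qed.


Section Main.
Variable V : Type.
Variables D L : digraph V.
Variables r v : V.
Hypothesis Hv : v <> r.
Hypothesis Lsub : subdigraph L D.
Variable Q : list V -> Prop.
Variable Sep : V -> Prop.
Hypothesis HQ : path_system (del_edge D r v) r v Q.
Hypothesis HQL : forall p, Q p -> walk L p.
Hypothesis HS : separation (del_edge D r v) r v Sep.
Hypothesis HO : orthogonal Q Sep.
Variable PI : list V -> Prop.
Hypothesis HPI : path_system L r v PI.

Definition lastS (l : list V) := maxidx (fun k => Sep (nth k l v)) (length l).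

Lemma S_nr w : Sep w -> w <> r /\ w <> v.
Proof. destruct HS as (_&_&H&_). apply H. Qed.

Lemma nodup_idx (l : list V) i j : NoDup l -> i < length l -> j < length l ->
  nth i l v = nth j l v -> i = j.
Proof. intros Hn. apply (proj1 (NoDup_nth l v) Hn). Qed.

Lemma Q_facts q : Q q ->
  NoDup q /\ 2 <= length q /\ nth 0 q v = r /\ nth (pred (length q)) q v = v /\
  (forall i, S i < length q -> L (nth i q v) (nth (S i) q v) /\ ~ (nth i q v = r /\ nth (S i) q v = v)).
Proof.
  intros Hq. pose proof (proj1 HQ q Hq) as Hp.
  apply (is_path_nth _ _ _ _ v) in Hp. destruct Hp as (Hne & Hnd & Hw & H0 & Hl).
  pose proof (HQL q Hq) as HwL. rewrite (walk_nth _ _ v) in HwL.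
  refine (conj Hnd (conj _ (conj H0 (conj Hl _)))).
  - destruct q as [|a [|b q]]; [congruence| |simpl; lia]. simpl in *. congruence.
  - intros i Hi. split; [apply HwL; auto | apply (Hw i Hi)].
Qed.

Lemma Q_S q : Q q ->
  lastS q < length q /\ Sep (nth (lastS q) q v) /\
  (forall k, k < length q -> Sep (nth k q v) -> k = lastS q) /\
  0 < lastS q /\ lastS q < pred (length q).
Proof.
  intros Hq. destruct (Q_facts q Hq) as (Hnd & Hlen & H0 & Hl & _).
  destruct (proj1 HO q Hq) as [w [[Hw Sw] Hu]].
  apply (In_nth_iff _ _ v) in Hw. destruct Hw as [i [Hi Ei]].
  subst w.
  destruct (maxidx_spec (fun k => Sep (nth k q v)) (length q) i Sw Hi) as (A & B & C & _).
  fold (lastS q) in A, B, C.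
  assert (U : forall k, k < length q -> Sep (nth k q v) -> k = lastS q).
  { intros k Hk Sk. assert (E1 := Hu _ (conj (nth_In _ _ Hk) Sk)).
    assert (E2 := Hu _ (conj (nth_In _ _ C) A)).
    apply (nodup_idx q); auto. congruence. }
  repeat split; auto.
  - destruct (lastS q) eqn:E; [|lia]. rewrite H0 in A. apply S_nr in A. tauto.
  - destruct (Nat.lt_ge_cases (lastS q) (pred (length q))); auto.
    assert (lastS q = pred (length q)) by lia. rewrite H1, Hl in A. apply S_nr in A. tauto.
Qed.

Lemma Q_uniq q1 q2 w : Q q1 -> Q q2 -> In w q1 -> In w q2 -> w <> r -> w <> v -> q1 = q2.
Proof.
  intros H1 H2 I1 I2 Nr Nv. destruct (classic (q1 = q2)) as [E|Ne]; auto.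
  destruct ((proj2 HQ) q1 q2 H1 H2 Ne w I1 I2); contradiction.
Qed.

Lemma PI_facts p : PI p -> p <> [r; v] ->
  NoDup p /\ 3 <= length p /\ nth 0 p v = r /\ nth (pred (length p)) p v = v /\
  (forall i, S i < length p -> L (nth i p v) (nth (S i) p v)) /\
  (forall i, i < length p -> nth i p v = r -> i = 0).
Proof.
  intros Hp Hne. pose proof (proj1 HPI p Hp) as Hpp.
  apply (is_path_nth _ _ _ _ v) in Hpp. destruct Hpp as (Hn & Hnd & Hw & H0 & Hl).
  assert (Hr : forall i, i < length p -> nth i p v = r -> i = 0).
  { intros i Hi E. apply (nodup_idx p); auto. destruct p; [congruence|simpl; lia]. congruence. }
  refine (conj Hnd (conj _ (conj H0 (conj Hl (conj Hw Hr))))).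
  destruct p as [|a [|b [|c p]]]; simpl in *; try lia; try congruence.
Qed.

Lemma PI_S p : PI p -> p <> [r; v] ->
  lastS p < length p /\ Sep (nth (lastS p) p v) /\
  (forall k, lastS p < k -> k < length p -> ~ Sep (nth k p v)) /\
  0 < lastS p /\ lastS p < pred (length p).
Proof.
  intros Hp Hne. destruct (PI_facts p Hp Hne) as (Hnd & Hlen & H0 & Hl & Hw & Hr).
  assert (Hpath : is_path (del_edge D r v) r v p).
  { apply (is_path_nth _ _ _ _ v). refine (conj _ (conj Hnd (conj _ (conj H0 Hl)))).
    - destruct p; simpl in *; [lia|congruence].
    - intros i Hi. split; [apply Lsub; apply Hw; auto|].
      intros [E1 E2]. apply Hr in E1; [|lia]. subst i.
      destruct p as [|a [|b [|c p]]]; simpl in *; try lia.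
      apply Hv. rewrite <- E2. 
      assert (NoDup (a :: b :: c :: p)) by auto.
      assert (pred (length (a :: b :: c :: p)) = 1).
      { apply (nodup_idx _ _ _ Hnd); simpl; try lia. rewrite Hl. simpl. auto. }
      simpl in H1. lia. }
  destruct HS as (_&_&_&Hsep). destruct (Hsep p Hpath) as [w [Hw' Sw]].
  apply (In_nth_iff _ _ v) in Hw'. destruct Hw' as [i [Hi Ei]]. subst w.
  destruct (maxidx_spec (fun k => Sep (nth k p v)) (length p) i Sw Hi) as (A & B & C & E).
  fold (lastS p) in A, B, C, E.
  repeat split; auto.
  - destruct (lastS p) eqn:Ez; [|lia]. rewrite H0 in A. apply S_nr in A. tauto.
  - destruct (Nat.lt_ge_cases (lastS p) (pred (length p))); auto.
    assert (lastS p = pred (length p)) by lia. rewrite H1, Hl in A. apply S_nr in A. tauto.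
Qed.

Definition Blue (t : list V) : Prop :=
  exists p, PI p /\ p <> [r; v] /\ t = skipn (lastS p) p.

Lemma Blue_facts t : Blue t ->
  NoDup t /\ 2 <= length t /\ nth (pred (length t)) t v = v /\
  (forall i, S i < length t -> L (nth i t v) (nth (S i) t v)) /\
  ~ In r t /\ Sep (nth 0 t v) /\
  (forall k, 0 < k -> k < length t -> ~ Sep (nth k t v)).
Proof.
  intros [p [Hp [Hne ->]]].
  destruct (PI_facts p Hp Hne) as (Hnd & Hlen & H0 & Hl & Hw & Hr).
  destruct (PI_S p Hp Hne) as (A & B & C & E & F).
  rewrite length_skipn.
  refine (conj _ (conj _ (conj _ (conj _ (conj _ (conj _ _)))))).
  - apply (NoDup_nth _ v). rewrite length_skipn. intros i j Hi Hj. rewrite !nth_skipn.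
    intros Eq. apply (nodup_idx p) in Eq; auto; lia.
  - lia.
  - rewrite nth_skipn. replace (lastS p + pred (length p - lastS p)) with (pred (length p)) by lia. exact Hl.
  - intros i Hi. rewrite !nth_skipn. replace (lastS p + S i) with (S (lastS p + i)) by lia.
    apply Hw. lia.
  - intros Hin. apply (In_nth_iff _ _ v) in Hin. destruct Hin as [i [Hi Ei]].
    rewrite length_skipn in Hi. rewrite nth_skipn in Ei. apply Hr in Ei; lia.
  - rewrite nth_skipn. rewrite Nat.add_0_r. auto.
  - intros k Hk Hk2. rewrite nth_skipn. apply C; lia.
Qed.

Lemma Blue_sub t : Blue t -> exists p, PI p /\ incl t p.
Proof.
  intros [p [Hp [_ ->]]]. exists p. split; auto.
  intros x Hx. rewrite <- (firstn_skipn (lastS p) p). apply in_or_app. right; auto.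
Qed.

Lemma Blue_uniq t1 t2 w : Blue t1 -> Blue t2 -> In w t1 -> In w t2 -> w <> v -> t1 = t2.
Proof.
  intros B1 B2 I1 I2 Nv.
  destruct (classic (t1 = t2)) as [E|Ne]; auto.
  destruct B1 as [p1 [Hp1 [Hn1 E1]]]. destruct B2 as [p2 [Hp2 [Hn2 E2]]].
  destruct (classic (p1 = p2)) as [Ep|Nep].
  { subst. contradiction. }
  assert (In w p1) by (rewrite <- (firstn_skipn (lastS p1) p1); apply in_or_app; right; congruence).
  assert (In w p2) by (rewrite <- (firstn_skipn (lastS p2) p2); apply in_or_app; right; congruence).
  destruct ((proj2 HPI) p1 p2 Hp1 Hp2 Nep w H H0) as [Er|Ev]; [|contradiction].
  subst w. exfalso. destruct (Blue_facts t1) as (_&_&_&_&Hr&_); [exists p1; auto|]. auto.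
Qed.


Lemma delL_D a b : del_edge L r v a b -> del_edge D r v a b.
Proof. intros [H1 H2]. split; auto. Qed.

Lemma Q_walk q : Q q -> walk (del_edge L r v) q.
Proof.
  intros Hq. destruct (Q_facts q Hq) as (_&_&_&_&E). apply (walk_nth _ _ v). intros i Hi.
  destruct (E i Hi). split; auto.
Qed.

Lemma Blue_walk t : Blue t -> walk (del_edge L r v) t.
Proof.
  intros Hb. destruct (Blue_facts t Hb) as (_&_&_&E&Nr&_). apply (walk_nth _ _ v). intros i Hi.
  split; auto. intros [E1 _]. apply Nr. rewrite <- E1. apply nth_In. lia.
Qed.

Lemma region t q k : Blue t -> Q q -> k < lastS q -> In (nth k q v) t -> False.
Proof.
  intros Hb Hq Hk Hin.
  destruct (Blue_facts t Hb) as (Nt & Lt & Lastt & Et & Nr & S0 & Sk).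
  destruct (Q_facts q Hq) as (Nq & Lq & q0 & ql & Eq).
  destruct (Q_S q Hq) as (A & B & U & C & F).
  apply (In_nth_iff _ _ v) in Hin. destruct Hin as [j [Hj Ej]].
  assert (Hk' : k < length q) by lia.
  assert (Hw : walk (del_edge L r v) (glue q k t j)).
  { apply (glue_walk _ _ _ _ _ v); auto using Q_walk, Blue_walk. }
  destruct (shorten' (del_edge L r v) (glue q k t j) r v v Hw) as [p [Hp Hinc]].
  - intros E. pose proof (glue_len q t k j Hk' Hj) as HL. rewrite E in HL. simpl in HL. lia.
  - rewrite glue_nth0; auto.
  - rewrite glue_last; auto.
  - destruct HS as (_&_&_&Hsep).
    assert (Hp' : is_path (del_edge D r v) r v p).
    { destruct Hp as (X1 & X2 & X3 & X4). repeat split; auto. eapply walk_mono; [|exact X2]. apply delL_D. }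
    destruct (Hsep p Hp') as [w [Hwp Sw]]. apply Hinc in Hwp.
    destruct (glue_in q t k j w v Hk' Hj Hwp) as [[i [Hi Ei]] | [i [Hi1 [Hi2 Ei]]]].
    + subst w. apply U in Sw; lia.
    + subst w. apply (Sk i); auto; lia.
Qed.


Definition Ypred (xs : list V -> nat) (t : list V) (k : nat) : Prop :=
  S k < length t /\ exists q m, Q q /\ m <= xs q /\ nth m q v = nth k t v.

Definition yof (xs : list V -> nat) (t : list V) : nat := maxidx (Ypred xs t) (length t).

Definition isY (xs : list V -> nat) (w : V) : Prop :=
  exists t, Blue t /\ Ypred xs t (yof xs t) /\ nth (yof xs t) t v = w.

Definition step (xs : list V -> nat) (q : list V) : nat :=
  minidx (fun k => isY xs (nth k q v)) (S (xs q)) (xs q).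

Fixpoint xn (n : nat) : list V -> nat :=
  match n with
  | 0 => fun q => pred (length q)
  | S n => step (xn n)
  end.

Lemma step_le xs q : step xs q <= xs q.
Proof.
  unfold step. destruct (minidx_spec (fun k => isY xs (nth k q v)) (S (xs q)) (xs q)) as [A B].
  destruct (classic (exists k, k < S (xs q) /\ isY xs (nth k q v))) as [He|He].
  - destruct (A He) as (_&C&_). lia.
  - rewrite (B He). lia.
Qed.

Lemma x_dec n q : xn (S n) q <= xn n q.
Proof. apply step_le. Qed.

Lemma x_le n q : xn n q <= pred (length q).
Proof. induction n; simpl; auto. pose proof (step_le (xn n) q). lia. Qed.

Lemma yof_mono xs xs' t : (forall q, xs' q <= xs q) -> yof xs' t <= yof xs t.
Proof.
  intros H. apply maxidx_mono. intros k [H1 [q [m (H2 & H3 & H4)]]].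
  split; auto. exists q, m. repeat split; auto. specialize (H q). lia.
Qed.

Lemma y_dec n t : yof (xn (S n)) t <= yof (xn n) t.
Proof. apply yof_mono. intros. apply x_dec. Qed.

Lemma inv n q : Q q -> xn n q = pred (length q) \/ isY (xn n) (nth (xn n q) q v).
Proof.
  intros Hq. induction n as [|n IH]; [left; reflexivity|].
  simpl. set (xs := xn n) in *.
  destruct (minidx_spec (fun k => isY xs (nth k q v)) (S (xs q)) (xs q)) as [A B].
  destruct (classic (exists k, k < S (xs q) /\ isY xs (nth k q v))) as [He|He].
  - right. destruct (A He) as (C & D' & E). fold (step xs q) in C, D', E.
    destruct C as [t [Hb [Hy Ht]]]. exists t.
    assert (Hy' : Ypred (step xs) t (yof xs t)).
    { destruct Hy as [Hl _]. split; auto. exists q, (step xs q). repeat split; auto. }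
    assert (Eq : yof (step xs) t = yof xs t).
    { apply Nat.le_antisymm.
      - apply yof_mono. intros; apply step_le.
      - destruct (maxidx_spec _ (length t) _ Hy') as (_&X&_); [destruct Hy'; lia|]. exact X. }
    rewrite Eq. auto.
  - unfold step. rewrite (B He). destruct IH as [IH|IH]; [left; auto|].
    exfalso. apply He. exists (xs q). split; auto.
Qed.

Lemma x_geS n q : Q q -> lastS q <= xn n q.
Proof.
  intros Hq. destruct (Q_S q Hq) as (A&_&_&_&F).
  destruct (inv n q Hq) as [E|[t [Hb [[Hl _] Ht]]]]; [lia|].
  destruct (Nat.le_gt_cases (lastS q) (xn n q)); auto.
  exfalso. apply (region t q (xn n q) Hb Hq H). rewrite <- Ht. apply nth_In. lia.
Qed.

Lemma Ypred_holds n t : Blue t -> Ypred (xn n) t (yof (xn n) t) /\ S (yof (xn n) t) < length t.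
Proof.
  intros Hb. destruct (Blue_facts t Hb) as (Nt & Lt & Lastt & Et & Nr & S0 & Sk).
  destruct (proj2 HO _ S0) as [q [Hq Hin]].
  apply (In_nth_iff _ _ v) in Hin. destruct Hin as [i [Hi Ei]].
  destruct (Q_S q Hq) as (A & B & U & C & F).
  assert (i = lastS q) by (apply U; auto; congruence). subst i.
  assert (Y0 : Ypred (xn n) t 0).
  { split; [lia|]. exists q, (lastS q). repeat split; auto. apply x_geS; auto. }
  destruct (maxidx_spec _ (length t) 0 Y0) as (X1 & _); [lia|].
  split; auto. destruct X1; auto.
Qed.


Definition Xl (q : list V) : nat := evlim (fun n => xn n q).
Definition Yl (t : list V) : nat := evlim (fun n => yof (xn n) t).

Lemma XN q : exists N, forall n, N <= n -> xn n q = Xl q.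
Proof. apply evlim_spec. intros; apply x_dec. Qed.

Lemma YN t : exists N, forall n, N <= n -> yof (xn n) t = Yl t.
Proof. apply evlim_spec. intros; apply y_dec. Qed.

Lemma X_le q : Xl q <= pred (length q).
Proof. destruct (XN q) as [N HN]. rewrite <- (HN N) by lia. apply x_le. Qed.

Lemma X_geS q : Q q -> lastS q <= Xl q.
Proof. intros Hq. destruct (XN q) as [N HN]. rewrite <- (HN N) by lia. apply x_geS; auto. Qed.

Lemma Y_lt t : Blue t -> S (Yl t) < length t.
Proof. intros Hb. destruct (YN t) as [N HN]. rewrite <- (HN N) by lia. apply Ypred_holds; auto. Qed.

Lemma Yv t : Blue t -> nth (Yl t) t v <> v /\ nth (Yl t) t v <> r.
Proof.
  intros Hb. pose proof (Y_lt t Hb).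
  destruct (Blue_facts t Hb) as (Nt & Lt & Lastt & Et & Nr & S0 & Sk). split.
  - intros E. assert (E' : nth (Yl t) t v = nth (pred (length t)) t v) by congruence.
    apply (nodup_idx t) in E'; auto; lia.
  - intros E. apply Nr. rewrite <- E. apply nth_In. lia.
Qed.

Lemma after t q k m : Blue t -> Yl t < k -> S k < length t -> Q q -> m <= Xl q ->
  nth m q v = nth k t v -> False.
Proof.
  intros Hb Hk Hk2 Hq Hm E.
  destruct (YN t) as [N1 H1]. destruct (XN q) as [N2 H2].
  assert (Yp : Ypred (xn (N1 + N2)) t k).
  { split; auto. exists q, m. repeat split; auto. rewrite H2; lia. }
  destruct (maxidx_spec _ (length t) k Yp) as (_ & X & _); [lia|].
  fold (yof (xn (N1 + N2)) t) in X. rewrite H1 in X by lia. lia.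
Qed.

Lemma blue_hit t : Blue t -> exists q, Q q /\ nth (Xl q) q v = nth (Yl t) t v /\ Xl q < pred (length q).
Proof.
  intros Hb. destruct (YN t) as [N1 H1].
  destruct (Ypred_holds N1 t Hb) as [[_ [q [m (Hq & Hm & Em)]]] _].
  destruct (XN q) as [N2 H2].
  set (n := N1 + N2).
  destruct (Ypred_holds n t Hb) as [[_ [q' [m' (Hq' & Hm' & Em')]]] Hlt].
  rewrite H1 in Em', Hlt by (unfold n; lia).
  destruct (Yv t Hb) as [Nv Nr].
  assert (Eq : q' = q).
  { apply (Q_uniq q' q (nth (Yl t) t v)); auto.
    - rewrite <- Em'. apply nth_In. pose proof (x_le n q'). destruct (Q_facts q' Hq') as (_&X&_). lia.
    - rewrite H1 in Em by lia. rewrite <- Em. apply nth_In. pose proof (x_le N1 q).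
      destruct (Q_facts q Hq) as (_&X&_). lia. }
  subst q'. clear m Hm Em.
  exists q. split; auto.
  assert (HY : isY (xn n) (nth m' q v)).
  { exists t. split; auto. rewrite H1 by (unfold n; lia). split; [|auto].
    destruct (Ypred_holds n t Hb) as [Y _]. rewrite H1 in Y by (unfold n; lia). exact Y. }
  assert (HS1 : xn (S n) q = Xl q) by (apply H2; unfold n; lia).
  assert (HS0 : xn n q = Xl q) by (apply H2; unfold n; lia).
  simpl in HS1. unfold step in HS1.
  destruct (minidx_spec (fun k => isY (xn n) (nth k q v)) (S (xn n q)) (xn n q)) as [A _].
  destruct (A (ex_intro _ m' (conj (le_n_S _ _ Hm') HY))) as (C & D' & E).
  rewrite HS1 in C, D', E.
  assert (m' = Xl q).
  { destruct (Nat.lt_ge_cases m' (Xl q)). - exfalso. apply (E m'); auto. - rewrite HS0 in Hm'. lia. }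
  subst m'. split; [congruence|].
  pose proof (X_le q). destruct (Nat.eq_dec (Xl q) (pred (length q))); [|lia].
  exfalso. apply Nv. rewrite <- Em'. rewrite e. destruct (Q_facts q Hq) as (_&_&_&X&_). exact X.
Qed.

Lemma red_hit q : Q q -> Xl q < pred (length q) -> exists t, Blue t /\ nth (Xl q) q v = nth (Yl t) t v.
Proof.
  intros Hq HX. destruct (XN q) as [N HN].
  destruct (Q_facts q Hq) as (Nq & Lq & q0 & ql & Eq).
  assert (Hw : forall n, N <= n -> exists t, Blue t /\ nth (yof (xn n) t) t v = nth (Xl q) q v /\ S (yof (xn n) t) < length t).
  { intros n Hn. destruct (inv n q Hq) as [E|[t [Hb [[Hl _] Ht]]]].
    - rewrite HN in E; lia.
    - exists t. rewrite HN in Ht by auto. auto. }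
  destruct (Hw N (le_n _)) as [t [Hb [Et Lt]]].
  destruct (YN t) as [N1 H1].
  destruct (Hw (N + N1)) as [t' [Hb' [Et' Lt']]]; [lia|].
  assert (Nv : nth (Xl q) q v <> v).
  { intros E. assert (E' : nth (Xl q) q v = nth (pred (length q)) q v) by congruence.
    apply (nodup_idx q) in E'; auto; lia. }
  assert (t' = t).
  { apply (Blue_uniq t' t (nth (Xl q) q v)); auto.
    - rewrite <- Et'. apply nth_In. lia.
    - rewrite <- Et. apply nth_In. lia. }
  subst t'. exists t. split; auto. rewrite H1 in Et' by lia. auto.
Qed.


Definition R q t := glue q (Xl q) t (Yl t).

Section RP.
Variables (q t : list V).
Hypothesis Hq : Q q.
Hypothesis Hb : Blue t.
Hypothesis HX : Xl q < pred (length q).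
Hypothesis HE : nth (Xl q) q v = nth (Yl t) t v.

Lemma R_in w : In w (R q t) ->
  (exists m, m <= Xl q /\ nth m q v = w) \/ (exists k, Yl t < k /\ k < length t /\ nth k t v = w).
Proof using All.
  intros Hin. pose proof (Y_lt t Hb). apply (glue_in q t (Xl q) (Yl t) w v); auto; lia.
Qed.

Lemma R_path : is_path (del_edge L r v) r v (R q t).
Proof using All.
  pose proof (Y_lt t Hb) as HY.
  destruct (Blue_facts t Hb) as (Nt & Lt & Lastt & Et & Nr & S0 & Sk).
  destruct (Q_facts q Hq) as (Nq & Lq & q0 & ql & Eq).
  assert (Hxl : Xl q < length q) by lia.
  apply (is_path_nth _ _ _ _ v). refine (conj _ (conj _ (conj _ (conj _ _)))).
  - intros E. pose proof (glue_len q t (Xl q) (Yl t) Hxl ltac:(lia)) as HL. unfold R in E.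
    rewrite E in HL. simpl in HL. lia.
  - apply (glue_nodup _ _ _ _ v); auto; try lia.
    intros i i' Hi Hi1 Hi2 E.
    destruct (Nat.eq_dec (S i') (length t)).
    + assert (nth i q v = v) by (rewrite E; replace i' with (pred (length t)) by lia; exact Lastt).
      assert (E' : nth i q v = nth (pred (length q)) q v) by congruence.
      apply (nodup_idx q) in E'; auto; lia.
    + apply (after t q i' i); auto; lia.
  - apply walk_nth. apply (glue_walk _ _ _ _ _ v); auto using Q_walk, Blue_walk; lia.
  - unfold R. rewrite glue_nth0; auto.
  - unfold R. rewrite glue_last; auto; lia.
Qed.

Lemma R_S w : In w (R q t) -> Sep w -> w = nth (lastS q) q v.
Proof using All.
  intros Hin Sw. destruct (Q_S q Hq) as (A & B & U & C & F).
  pose proof (Y_lt t Hb).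
  destruct (Blue_facts t Hb) as (Nt & Lt & Lastt & Et & Nr & S0 & Sk).
  destruct (R_in w Hin) as [[m [Hm Em]]|[k [Hk1 [Hk2 Ek]]]].
  - subst w. f_equal. apply U; auto. lia.
  - subst w. exfalso. apply (Sk k); auto. lia.
Qed.

Lemma R_has : In (nth (lastS q) q v) (R q t).
Proof using All. apply glue_in_l; [lia|]. apply X_geS; auto. Qed.

End RP.

Definition Pnew (p : list V) : Prop :=
  (exists q, Q q /\ Xl q = pred (length q) /\ p = q) \/
  (exists q t, Q q /\ Blue t /\ Xl q < pred (length q) /\ nth (Xl q) q v = nth (Yl t) t v /\ p = R q t) \/
  (p = [r; v] /\ L r v).

Lemma Q_path q : Q q -> is_path (del_edge L r v) r v q.
Proof.
  intros Hq. destruct (proj1 HQ q Hq) as (A & B & C & E). repeat split; auto. apply Q_walk; auto.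
Qed.

Lemma Q_in q w : Q q -> In w q -> exists m, m < length q /\ nth m q v = w.
Proof. intros _ H. apply In_nth_iff; auto. Qed.

Lemma disj12 q1 q2 t2 w : Q q1 -> Xl q1 = pred (length q1) ->
  Q q2 -> Blue t2 -> Xl q2 < pred (length q2) -> nth (Xl q2) q2 v = nth (Yl t2) t2 v ->
  In w q1 -> In w (R q2 t2) -> w = r \/ w = v.
Proof.
  intros Hq1 HX1 Hq2 Hb2 HX2 HE2 I1 I2.
  destruct (R_in q2 t2 Hq2 Hb2 HX2 HE2 w I2) as [[m [Hm Em]]|[k [Hk1 [Hk2 Ek]]]].
  - assert (q1 <> q2) by (intros ->; lia).
    apply ((proj2 HQ) q1 q2 Hq1 Hq2 H w I1). rewrite <- Em. apply nth_In. lia.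
  - destruct (Blue_facts t2 Hb2) as (Nt & Lt & Lastt & _).
    destruct (Nat.eq_dec (S k) (length t2)).
    + right. rewrite <- Ek. replace k with (pred (length t2)) by lia. exact Lastt.
    + exfalso. apply (In_nth_iff _ _ v) in I1. destruct I1 as [m [Hm Em]].
      apply (after t2 q1 k m); auto; try lia. congruence.
Qed.

Lemma disj22 q1 t1 q2 t2 w :
  Q q1 -> Blue t1 -> Xl q1 < pred (length q1) -> nth (Xl q1) q1 v = nth (Yl t1) t1 v ->
  Q q2 -> Blue t2 -> Xl q2 < pred (length q2) -> nth (Xl q2) q2 v = nth (Yl t2) t2 v ->
  R q1 t1 <> R q2 t2 ->
  In w (R q1 t1) -> In w (R q2 t2) -> w = r \/ w = v.
Proof.
  intros Hq1 Hb1 HX1 HE1 Hq2 Hb2 HX2 HE2 Hne I1 I2.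
  pose proof (Y_lt t1 Hb1). pose proof (Y_lt t2 Hb2).
  assert (Nq : q1 <> q2).
  { intros <-. apply Hne. f_equal. destruct (Yv t1 Hb1) as [Nv _].
    apply (Blue_uniq t1 t2 (nth (Xl q1) q1 v)); auto.
    - rewrite HE1. apply nth_In. lia.
    - rewrite HE2. apply nth_In. lia.
    - congruence. }
  assert (Nt : t1 <> t2).
  { intros <-. apply Nq. destruct (Yv t1 Hb1) as [Nv Nr].
    apply (Q_uniq q1 q2 (nth (Yl t1) t1 v)); auto.
    - rewrite <- HE1. apply nth_In. lia.
    - rewrite <- HE2. apply nth_In. lia. }
  destruct (R_in q1 t1 Hq1 Hb1 HX1 HE1 w I1) as [[m1 [Hm1 Em1]]|[k1 [Hk1 [Hk1' Ek1]]]];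
  destruct (R_in q2 t2 Hq2 Hb2 HX2 HE2 w I2) as [[m2 [Hm2 Em2]]|[k2 [Hk2 [Hk2' Ek2]]]].
  - apply ((proj2 HQ) q1 q2 Hq1 Hq2 Nq w).
    + rewrite <- Em1. apply nth_In. lia.
    + rewrite <- Em2. apply nth_In. lia.
  - destruct (Blue_facts t2 Hb2) as (_ & _ & Lastt & _).
    destruct (Nat.eq_dec (S k2) (length t2)).
    + right. rewrite <- Ek2. replace k2 with (pred (length t2)) by lia. exact Lastt.
    + exfalso. apply (after t2 q1 k2 m1); auto; try lia. congruence.
  - destruct (Blue_facts t1 Hb1) as (_ & _ & Lastt & _).
    destruct (Nat.eq_dec (S k1) (length t1)).
    + right. rewrite <- Ek1. replace k1 with (pred (length t1)) by lia. exact Lastt.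
    + exfalso. apply (after t1 q2 k1 m2); auto; try lia. congruence.
  - destruct (classic (w = v)) as [Ev|Nv]; [right; auto|].
    exfalso. apply Nt. apply (Blue_uniq t1 t2 w); auto.
    + rewrite <- Ek1. apply nth_In. lia.
    + rewrite <- Ek2. apply nth_In. lia.
Qed.

Lemma Pnew_path p : Pnew p -> p <> [r; v] -> is_path (del_edge L r v) r v p.
Proof.
  intros [[q (Hq & _ & ->)]|[[q [t (Hq & Hb & HX & HE & ->)]]|[-> _]]] Hne.
  - apply Q_path; auto.
  - apply R_path; auto.
  - congruence.
Qed.

Lemma Pnew_disj p1 p2 w : Pnew p1 -> Pnew p2 -> p1 <> p2 -> In w p1 -> In w p2 -> w = r \/ w = v.
Proof.
  intros P1 P2 Hne I1 I2.
  destruct P1 as [[q1 (Hq1 & HX1 & ->)]|[[q1 [t1 (Hq1 & Hb1 & HX1 & HE1 & ->)]]|[-> _]]];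
  [| |simpl in I1; intuition].
  - destruct P2 as [[q2 (Hq2 & HX2 & ->)]|[[q2 [t2 (Hq2 & Hb2 & HX2 & HE2 & ->)]]|[-> _]]];
    [| |simpl in I2; intuition].
    + apply ((proj2 HQ) q1 q2); auto.
    + apply (disj12 q1 q2 t2); auto.
  - destruct P2 as [[q2 (Hq2 & HX2 & ->)]|[[q2 [t2 (Hq2 & Hb2 & HX2 & HE2 & ->)]]|[-> _]]];
    [| |simpl in I2; intuition].
    + apply (disj12 q2 q1 t1); auto.
    + apply (disj22 q1 t1 q2 t2); auto.
Qed.


Lemma path_mono (H H' : digraph V) x y p : (forall a b, H a b -> H' a b) -> is_path H x y p -> is_path H' x y p.
Proof. intros Hs (A & B & C & E). repeat split; auto. eapply walk_mono; eauto. Qed.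

Lemma Pnew_ps : path_system L r v Pnew.
Proof.
  split.
  - intros p Hp. destruct (classic (p = [r; v])) as [->|Hne].
    + destruct Hp as [[q (Hq & _ & E)]|[[q [t (Hq & Hb & HX & HE & E)]]|[_ HL]]].
      * apply (path_mono (del_edge L r v)); [intros a b [X _]; auto|]. rewrite E. apply Q_path; auto.
      * apply (path_mono (del_edge L r v)); [intros a b [X _]; auto|]. rewrite E. apply R_path; auto.
      * repeat split; simpl; auto. constructor; [simpl; intuition|]. constructor; [simpl; auto|constructor].
    + apply (path_mono (del_edge L r v)); [intros a b [X _]; auto|]. apply Pnew_path; auto.
  - intros p1 p2 P1 P2 Hne w I1 I2. apply (Pnew_disj p1 p2 w); auto.
Qed.

Lemma Pnew_EM H : (forall a b, del_edge L r v a b -> H a b) -> (forall a b, H a b -> del_edge D r v a b) ->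
  erdos_menger H r v (remove_rv r v Pnew).
Proof.
  intros H1 H2. split; [split|].
  - intros p [Hp Hne]. apply (path_mono (del_edge L r v)); auto. apply Pnew_path; auto.
  - intros p1 p2 [P1 _] [P2 _] Hne w I1 I2. apply (Pnew_disj p1 p2 w); auto.
  - exists Sep. destruct HS as (SA & SB & SC & SE). split; [split; [auto|split; [|split]]|split].
    + intros Hr. apply H2 in Hr. destruct Hr as [_ X]. auto.
    + exact SC.
    + intros p Hp. apply SE. apply (path_mono H); auto.
    + intros p [Hp Hne].
      destruct Hp as [[q (Hq & _ & ->)]|[[q [t (Hq & Hb & HX & HE & ->)]]|[-> _]]]; [| |congruence].
      * apply HO; auto.
      * exists (nth (lastS q) q v). destruct (Q_S q Hq) as (X1 & X2 & _).
        split; [split; auto; apply R_has; auto|].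
        intros w [Iw Sw]. symmetry. apply (R_S q t); auto.
    + intros w Sw. destruct (proj2 HO w Sw) as [q [Hq Iw]].
      destruct (Q_S q Hq) as (X1 & X2 & U & _).
      apply (In_nth_iff _ _ v) in Iw. destruct Iw as [i [Hi Ei]].
      assert (i = lastS q) by (apply U; auto; congruence). subst i w.
      destruct (S_nr _ X2) as [Nr Nv].
      assert (Hnrv : forall p, In (nth (lastS q) q v) p -> p <> [r; v]).
      { intros p Ip E. subst p. simpl in Ip. intuition. }
      pose proof (X_le q).
      destruct (Nat.eq_dec (Xl q) (pred (length q))).
      * exists q. split; [split; [left; exists q; auto|]|]; [apply Hnrv; apply nth_In; auto| apply nth_In; auto].
      * destruct (red_hit q Hq ltac:(lia)) as [t [Hb HE]].
        assert (I : In (nth (lastS q) q v) (R q t)) by (apply R_has; auto; lia).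
        exists (R q t). split; [split; [right; left; exists q, t; repeat split; auto; lia|apply Hnrv; auto]|auto].
Qed.

Lemma Pnew_Eplus e : Eplus PI e -> Eplus Pnew e.
Proof.
  intros [p [Hp Ht]].
  destruct (classic (p = [r; v])) as [->|Hne].
  - destruct Ht as [pre Hpre].
    assert (pre = []) by (destruct pre as [|a [|b pre]]; auto; simpl in Hpre; try discriminate;
      injection Hpre; intros; destruct pre; discriminate).
    subst pre. simpl in Hpre. injection Hpre as E1 E2.
    exists [r; v]. split.
    + right; right. split; auto. destruct (proj1 HPI _ Hp) as (_ & [X _] & _). auto.
    + exists []. simpl. rewrite <- E1, <- E2. reflexivity.
  - set (t := skipn (lastS p) p).
    assert (Hb : Blue t) by (exists p; auto).
    destruct (blue_hit t Hb) as [q (Hq & HE & HX)].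
    exists (R q t). split; [right; left; exists q, t; auto|].
    apply (term_edge_nth _ _ v) in Ht. destruct Ht as (Hl & E1 & E2).
    apply (term_edge_nth _ _ v).
    pose proof (Y_lt t Hb).
    destruct (PI_S p Hp Hne) as (A & B & C & F & G).
    assert (Lt : length t = length p - lastS p) by (unfold t; rewrite length_skipn; auto).
    assert (Hxl : Xl q < length q) by lia.
    unfold R. rewrite glue_len by lia.
    assert (T1 : nth (length t - 2) t v = fst e).
    { unfold t at 2. rewrite nth_skipn. rewrite <- E1. f_equal. lia. }
    assert (T2 : nth (length t - 1) t v = snd e).
    { unfold t at 2. rewrite nth_skipn. rewrite <- E2. f_equal. lia. }
    split; [lia|split].
    + destruct (Nat.eq_dec (S (Yl t)) (length t - 1)).
      * replace (S (Xl q) + (length t - S (Yl t)) - 2) with (Xl q) by lia.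
        rewrite glue_nth1 by lia. rewrite HE, <- T1. f_equal. lia.
      * rewrite glue_nth2 by lia. rewrite <- T1. f_equal. lia.
    + rewrite glue_nth2 by lia. rewrite <- T2. f_equal. lia.
Qed.

End Main.

Theorem corollary2p6 (V : Type) (D L : digraph V) (r v : V)
  (HD : loopless D) (Hv : v <> r) (HL : v_large D L r v) :
  forall I : V * V -> Prop, Gset L r v I ->
  exists P : list V -> Prop,
    path_system L r v P /\
    frakP D r v (remove_rv r v P) /\
    frakP L r v (remove_rv r v P) /\
    (forall e, I e -> Eplus P e).
Proof.
  intros I [_ [PI [HPI HIe]]].
  destruct HL as [Lsub [[Q [[HQ [Sep [HS HO]]] HQL]] _]].
  exists (Pnew V L r v Q Sep PI). split; [|split; [|split]].
  - eapply Pnew_ps; eauto.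
  - unfold frakP. eapply Pnew_EM; eauto. intros a b [X Y]. split; auto.
  - unfold frakP. eapply Pnew_EM; eauto. intros a b [X Y]. split; auto.
  - intros e He. eapply Pnew_Eplus; eauto. apply HIe; auto.
Qed.
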